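(* For every integer $n\ge6$, $B(n)\ge 2^{\lceil n/2\rceil}$.
   Context: Fix a field $\mathbb{F}$. All algebras are finite-dimensional, unital, not necessarily associative $\mathbb{F}$-algebras. For a finite generating set $S$ of an algebra $\mathcal{A}$, a word in $S$ is any product (with any bracketing) of finitely many elements of $S$; its length is the number of factors, and $1$ is a word of length $0$. $L_i(S)$ is the linear span of all words in $S$ of length at most $i$. The length of $S$ is $l(S)=\min\{k\ge0: L_k(S)=\mathcal{A}\}$, and $l(\mathcal{A})=\max\{l(S): S\text{ a finite generating set of }\mathcal{A}\}$. For a natural number $n\ge2$, $B(n)$ denotes the maximal integer $l>0$ such that for every $j\in\{1,\ldots,l\}$ there exists an algebra of dimension $n$ and length $j$. *)

(* Defs.v *)
From mathcomp Require Import all_boot all_order all_algebra.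
Set Implicit Arguments. Unset Strict Implicit. Unset Printing Implicit Defensive.
Import GRing.Theory.
Local Open Scope ring_scope.

(* A finite-dimensional, unital, not necessarily associative F-algebra of
   dimension n, realized on the coordinate space F^n = 'rV[F]_n
   (every n-dimensional algebra is isomorphic to such a one). *)
Record nalg (F : fieldType) (n : nat) := NAlg {
  amul : 'rV[F]_n -> 'rV[F]_n -> 'rV[F]_n;
  aone : 'rV[F]_n;
  amul_linl : forall (c : F) (x y z : 'rV[F]_n),
      amul (c *: x + y) z = c *: amul x z + amul y z;
  amul_linr : forall (c : F) (x y z : 'rV[F]_n),
      amul z (c *: x + y) = c *: amul z x + amul z y;
  amul1l : forall x, amul aone x = x;
  amul1r : forall x, amul x aone = x
}.

Section Words.
Variables (F : fieldType) (n : nat) (A : nalg F n).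

Inductive word (S : seq 'rV[F]_n) : nat -> 'rV[F]_n -> Prop :=
| word_one : word S 0 (aone A)
| word_gen s : s \in S -> word S 1 s
| word_mul a b x y : (0 < a)%N -> (0 < b)%N -> word S a x -> word S b y ->
    word S (a + b) (amul A x y).

Definition inL (S : seq 'rV[F]_n) (i : nat) (v : 'rV[F]_n) : Prop :=
  exists (m : nat) (c : 'I_m -> F) (w : 'I_m -> 'rV[F]_n),
    (forall k, exists a, (a <= i)%N /\ word S a (w k)) /\
    v = \sum_(k < m) c k *: w k.

Definition L_full (S : seq 'rV[F]_n) (i : nat) : Prop :=
  forall v, inL S i v.

Definition generates (S : seq 'rV[F]_n) : Prop :=
  forall v, exists i, inL S i v.

Definition set_length (S : seq 'rV[F]_n) (k : nat) : Prop :=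
  L_full S k /\ forall i, (i < k)%N -> ~ L_full S i.

Definition alg_length (l : nat) : Prop :=
  (exists S, generates S /\ set_length S l) /\
  (forall S k, generates S -> set_length S k -> (k <= l)%N).
End Words.

(* "B(n) >= m" unfolded: for every j in {1,...,m} there exists an algebra of
   dimension n and length j (B(n) is the maximal such m). *)
Definition B_atleast (F : fieldType) (n m : nat) : Prop :=
  forall j, (1 <= j <= m)%N -> exists A : nalg F n, alg_length A j.

(* Main.v *)
Require Import Defs.
From mathcomp Require Import all_boot all_order all_algebra.
From mathcomp Require Import zify.
Set Implicit Arguments. Unset Strict Implicit. Unset Printing Implicit Defensive.
Import GRing.Theory.
Local Open Scope ring_scope.

Section Gen.
Variables (F : fieldType) (n : nat) (A : nalg F n) (S : seq 'rV[F]_n).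

Lemma amul0l z : amul A 0 z = 0.
Proof.
have := amul_linl A 1 0 0 z; rewrite !scale1r addr0 => h.
by apply: (@addrI _ (amul A 0 z)); rewrite addr0 -h.
Qed.
Lemma amul0r z : amul A z 0 = 0.
Proof.
have := amul_linr A 1 0 0 z; rewrite !scale1r addr0 => h.
by apply: (@addrI _ (amul A z 0)); rewrite addr0 -h.
Qed.
Lemma amulDl x y z : amul A (x + y) z = amul A x z + amul A y z.
Proof. by have := amul_linl A 1 x y z; rewrite !scale1r. Qed.
Lemma amulDr x y z : amul A z (x + y) = amul A z x + amul A z y.
Proof. by have := amul_linr A 1 x y z; rewrite !scale1r. Qed.
Lemma amulZl c x z : amul A (c *: x) z = c *: amul A x z.
Proof. by have := amul_linl A c x 0 z; rewrite !addr0 amul0l addr0. Qed.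
Lemma amulZr c x z : amul A z (c *: x) = c *: amul A z x.
Proof. by have := amul_linr A c x 0 z; rewrite !addr0 amul0r addr0. Qed.

Lemma amulBl x y z : amul A (x - y) z = amul A x z - amul A y z.
Proof. by rewrite amulDl -scaleN1r amulZl scaleN1r. Qed.
Lemma amulBr x y z : amul A z (x - y) = amul A z x - amul A z y.
Proof. by rewrite amulDr -scaleN1r amulZr scaleN1r. Qed.

Lemma word0 k u : word A S k u -> k = 0%N -> u = aone A.
Proof.
case=> [//|s _ //|a b x y a0 b0 _ _ /eqP].
by rewrite addn_eq0 -[a == 0%N]negbK -lt0n a0.
Qed.

Lemma inL0 i : inL A S i 0.
Proof. by exists 0%N, (fun _ => 0), (fun _ => 0); split=> [[]|]; rewrite ?big_ord0. Qed.

Lemma inL_word i a v : (a <= i)%N -> word A S a v -> inL A S i v.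
Proof.
move=> ai wv; exists 1%N, (fun _ => 1), (fun _ => v); split.
  by move=> _; exists a.
by rewrite big_ord1 scale1r.
Qed.

Lemma inLD i u v : inL A S i u -> inL A S i v -> inL A S i (u + v).
Proof.
move=> [m1 [c1 [w1 [h1 ->]]]] [m2 [c2 [w2 [h2 ->]]]].
exists (m1 + m2)%N.
exists (fun k => match split k with inl a => c1 a | inr b => c2 b end).
exists (fun k => match split k with inl a => w1 a | inr b => w2 b end).
split.
  by move=> k; case: (split k).
rewrite big_split_ord /=; congr (_ + _); apply: eq_bigr => k _.
  by have := unsplitK (inl k : 'I_m1 + 'I_m2); rewrite /= => ->.
by have := unsplitK (inr k : 'I_m1 + 'I_m2); rewrite /= => ->.
Qed.

Lemma inLZ i c v : inL A S i v -> inL A S i (c *: v).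
Proof.
move=> [m [c1 [w1 [h1 ->]]]]; exists m, (fun k => c * c1 k), w1; split=> //.
by rewrite scaler_sumr; apply: eq_bigr => k _; rewrite scalerA.
Qed.

Lemma inL_ind i (P : 'rV[F]_n -> Prop) :
  P 0 -> (forall u v, P u -> P v -> P (u + v)) -> (forall c v, P v -> P (c *: v)) ->
  (forall a v, (a <= i)%N -> word A S a v -> P v) ->
  forall v, inL A S i v -> P v.
Proof.
move=> P0 PD PZ PW v [m [c [w [h ->]]]].
apply: (big_ind P) => // k _; apply: PZ; have [a [ai wa]] := h k; exact: PW wa.
Qed.

Lemma inL_mono i j v : (i <= j)%N -> inL A S i v -> inL A S j v.
Proof.
move=> ij; apply: inL_ind; [exact: inL0|exact: inLD|exact: inLZ|].
move=> a u ai; apply: inL_word; exact: leq_trans ij.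
Qed.

Lemma inL_sum i m (f : 'I_m -> 'rV[F]_n) : (forall k, inL A S i (f k)) -> inL A S i (\sum_k f k).
Proof. by move=> h; apply: (big_ind (inL A S i)) => //; [exact: inL0|exact: inLD]. Qed.

Lemma inL_mul a b x y : inL A S a x -> inL A S b y -> inL A S (a + b) (amul A x y).
Proof.
move=> hx hy; move: x hx.
apply: inL_ind.
- by rewrite amul0l; exact: inL0.
- by move=> u v hu hv; rewrite amulDl; exact: inLD.
- by move=> c v hv; rewrite amulZl; exact: inLZ.
move=> a' u aa wu; move: y hy; apply: inL_ind.
- by rewrite amul0r; exact: inL0.
- by move=> u' v hu hv; rewrite amulDr; exact: inLD.
- by move=> c v hv; rewrite amulZr; exact: inLZ.
move=> b' v bb wv.
case: (posnP a') => [a0|ap].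
  rewrite (word0 wu a0) amul1l; apply: inL_word wv.
  exact: leq_trans bb (leq_addl _ _).
case: (posnP b') => [b0|bp].
  rewrite (word0 wv b0) amul1r; apply: inL_word wu.
  exact: leq_trans aa (leq_addr _ _).
apply: inL_word (word_mul ap bp wu wv); exact: leq_add.
Qed.

End Gen.

Section Conc.
Variables (F : fieldType) (n : nat) (w : 'I_n.+1 -> nat)
  (E : 'I_n.+1 -> 'I_n.+1 -> 'rV[F]_n.+1) (J : nat).

Definition ev (i : 'I_n.+1) : 'rV[F]_n.+1 := delta_mx 0 i.

Lemma evE i j : ev i 0 j = (j == i)%:R.
Proof. by rewrite /ev mxE eqxx. Qed.

Lemma sum_ev (V : 'I_n.+1 -> 'rV[F]_n.+1) i0 : \sum_k ev i0 0 k *: V k = V i0.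
Proof.
rewrite (bigD1 i0) //= evE eqxx scale1r big1 ?addr0 // => k /negbTE nk.
by rewrite evE nk scale0r.
Qed.

Lemma vsum (v : 'rV[F]_n.+1) : v = \sum_k v 0 k *: ev k.
Proof. rewrite /ev; exact: row_sum_delta. Qed.

Definition cmul (x y : 'rV[F]_n.+1) : 'rV[F]_n.+1 :=
  \sum_i x 0 i *: \sum_k y 0 k *: E i k.

Hypothesis HE0l : forall k, E ord0 k = ev k.
Hypothesis HE0r : forall i, E i ord0 = ev i.

Lemma cmul_linl c x y z : cmul (c *: x + y) z = c *: cmul x z + cmul y z.
Proof.
rewrite /cmul scaler_sumr -big_split; apply: eq_bigr => i _.
by rewrite !mxE scalerDl scalerA.
Qed.

Lemma cmul_linr c x y z : cmul z (c *: x + y) = c *: cmul z x + cmul z y.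
Proof.
rewrite /cmul scaler_sumr -big_split; apply: eq_bigr => i _.
have -> : \sum_k (c *: x + y) 0 k *: E i k =
   c *: (\sum_k x 0 k *: E i k) + \sum_k y 0 k *: E i k.
  by rewrite scaler_sumr -big_split; apply: eq_bigr => k _; rewrite !mxE scalerDl scalerA.
by rewrite scalerDr !scalerA mulrC.
Qed.

Lemma cmul1l x : cmul (ev ord0) x = x.
Proof.
rewrite /cmul sum_ev [RHS]vsum; apply: eq_bigr => k _; by rewrite HE0l.
Qed.

Lemma cmul1r x : cmul x (ev ord0) = x.
Proof.
rewrite /cmul [RHS]vsum; apply: eq_bigr => i _; by rewrite sum_ev HE0r.
Qed.

Definition A : nalg F n.+1 := NAlg cmul_linl cmul_linr cmul1l cmul1r.

Lemma amul_ev i k : amul A (ev i) (ev k) = E i k.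
Proof. by rewrite /= /cmul sum_ev sum_ev. Qed.

Lemma aoneE : aone A = ev ord0.
Proof. by []. Qed.

Definition inN a (v : 'rV[F]_n.+1) := forall i, (w i < a)%N -> v 0 i = 0.

Lemma inN0 a : inN a 0.
Proof. by move=> i _; rewrite mxE. Qed.
Lemma inND a u v : inN a u -> inN a v -> inN a (u + v).
Proof. by move=> hu hv i hi; rewrite mxE hu ?hv ?addr0. Qed.
Lemma inNZ a c v : inN a v -> inN a (c *: v).
Proof. by move=> hv i hi; rewrite mxE hv ?mulr0. Qed.
Lemma inNN a v : inN a v -> inN a (- v).
Proof. by move=> hv i hi; rewrite mxE hv ?oppr0. Qed.
Lemma inNB a u v : inN a u -> inN a v -> inN a (u - v).
Proof. by move=> hu hv; apply: inND => //; apply: inNN. Qed.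
Lemma inN_mono a b v : (b <= a)%N -> inN a v -> inN b v.
Proof. by move=> ba hv i hi; apply: hv; exact: leq_trans hi ba. Qed.
Lemma inN_ev a c : (a <= w c)%N -> inN a (ev c).
Proof.
move=> ac i hi; rewrite evE; case: eqP => // ic; subst i.
by move: hi; rewrite ltnNge ac.
Qed.

Hypothesis Hw0 : w ord0 = 0%N.
Hypothesis Hwpos : forall i, i != ord0 -> (0 < w i)%N.
Hypothesis HwJ : forall i, (w i <= J)%N.
Hypothesis HEw : forall i k, i != ord0 -> k != ord0 ->
  E i k = 0 \/ exists2 c, E i k = ev c & w c = (w i + w k)%N.
Hypothesis HEgen : forall c, (1 < w c)%N -> exists i k,
  [/\ (0 < w i)%N, (0 < w k)%N, w c = (w i + w k)%N & E i k = ev c].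
Hypothesis Htop : exists c, w c = J.
Hypothesis HJ : (0 < J)%N.

Lemma cmulN a b x y : (0 < a)%N -> (0 < b)%N -> inN a x -> inN b y ->
  inN (a + b) (amul A x y).
Proof.
move=> a0 b0 hx hy c hc; rewrite /= /cmul summxE big1 // => i _.
rewrite mxE summxE; case: (ltnP (w i) a) => [lt|ge]; first by rewrite hx // mul0r.
rewrite big1 ?mulr0 // => k _; rewrite mxE.
case: (ltnP (w k) b) => [ltk|gek]; first by rewrite hy // mul0r.
have i0 : i != ord0 by apply/eqP => i0; move: ge; rewrite i0 Hw0 leqn0 => /eqP a00; move: a0; rewrite a00.
have k0 : k != ord0 by apply/eqP => k0; move: gek; rewrite k0 Hw0 leqn0 => /eqP b00; move: b0; rewrite b00.
case: (HEw i0 k0) => [->|[c' -> wc']]; first by rewrite mxE mulr0.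
rewrite evE; case: eqP => [cc|]; last by rewrite mulr0.
subst c'; move: hc; rewrite wc' ltnNge (leq_add ge gek) //.
Qed.


Lemma inN1 (v : 'rV[F]_n.+1) : v 0 ord0 = 0 -> inN 1 v.
Proof.
move=> h i; rewrite ltnS leqn0 => /eqP wi; case: (eqVneq i ord0) => [->//|ni].
by move: (Hwpos ni); rewrite wi.
Qed.

Lemma decomp (v : 'rV[F]_n.+1) : v = v 0 ord0 *: ev ord0 + (v - v 0 ord0 *: ev ord0).
Proof. by rewrite addrC subrK. Qed.

Lemma decomp_inN1 (v : 'rV[F]_n.+1) : inN 1 (v - v 0 ord0 *: ev ord0).
Proof. by apply: inN1; rewrite !mxE !eqxx /= mulr1 subrr. Qed.

Section Upper.
Variable S : seq 'rV[F]_n.+1.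

Definition U v := exists l, inL A S 1 l /\ inN 2 (v - l).

Lemma U0 : U 0.
Proof. by exists 0; split; [exact: inL0|rewrite subrr; exact: inN0]. Qed.
Lemma UD u v : U u -> U v -> U (u + v).
Proof.
move=> [l1 [h1 n1]] [l2 [h2 n2]]; exists (l1 + l2); split; first exact: inLD.
by rewrite opprD addrACA; apply: inND.
Qed.
Lemma UZ c v : U v -> U (c *: v).
Proof.
move=> [l [h nl]]; exists (c *: l); split; first exact: inLZ.
by rewrite -scalerBr; apply: inNZ.
Qed.
Lemma UB u v : U u -> U v -> U (u - v).
Proof. by move=> hu hv; apply: UD => //; rewrite -scaleN1r; apply: UZ. Qed.
Lemma UN2 v : inN 2 v -> U v.
Proof. by move=> h; exists 0; split; [exact: inL0|rewrite subr0]. Qed.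
Lemma Ue0 : U (ev ord0).
Proof.
exists (ev ord0); split; last by rewrite subrr; exact: inN0.
by apply: (@inL_word _ _ _ _ _ 0%N) => //; rewrite -aoneE; constructor.
Qed.

Lemma Umul x y : U x -> U y -> U (amul A x y).
Proof.
move=> Ux Uy.
pose x' := x - x 0 ord0 *: ev ord0; pose y' := y - y 0 ord0 *: ev ord0.
have ex : x = x 0 ord0 *: ev ord0 + x' by rewrite /x' addrC subrK.
have ey : y = y 0 ord0 *: ev ord0 + y' by rewrite /y' addrC subrK.
have Ux' : U x' by apply: UB => //; apply: UZ; exact: Ue0.
have Uy' : U y' by apply: UB => //; apply: UZ; exact: Ue0.
have nx' : inN 1 x' by exact: decomp_inN1.
have ny' : inN 1 y' by exact: decomp_inN1.
clearbody x' y'.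
move: (x 0 ord0) (y 0 ord0) ex ey => a b -> ->.
rewrite amulDl !amulDr !amulZl !amulZr -aoneE amul1l amul1r amul1l.
apply: UD; first by apply: UD; apply: UZ => //; apply: UZ; rewrite aoneE; exact: Ue0.
apply: UD; first by apply: UZ.
apply: UN2; exact: (@cmulN 1 1).
Qed.

Lemma Uword a v : word A S a v -> U v.
Proof.
elim=> [|s sS|a' b' x y a0 b0 _ Ux _ Uy].
- by rewrite aoneE; exact: Ue0.
- exists s; split; last by rewrite subrr; exact: inN0.
  apply: (@inL_word _ _ _ _ _ 1%N) => //; exact: word_gen.
exact: Umul.
Qed.

Hypothesis gen : generates A S.

Lemma Uall v : U v.
Proof.
have [i hi] := gen v; move: v hi; apply: inL_ind.
- exact: U0.
- exact: UD.
- exact: UZ.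
by move=> a v _; apply: Uword.
Qed.

Lemma Gstep N : forall a c, (a <= N)%N -> w c = a -> (0 < a)%N ->
  exists l, inL A S a l /\ inN a.+1 (ev c - l).
Proof.
elim: N => [|N IH] a c aN wc a0.
  by move: aN; rewrite leqn0 => /eqP a00; move: a0; rewrite a00.
case: (ltnP 1 a) => [a1|a1]; last first.
  have a1' : a = 1%N by lia.
  rewrite a1'; have [l [hl nl]] := Uall (ev c); by exists l.
have [i [k [wi0 wk0 wce Eik]]] : exists i k,
  [/\ (0 < w i)%N, (0 < w k)%N, w c = (w i + w k)%N & E i k = ev c].
  by apply: HEgen; rewrite wc.
have wia : (w i < a)%N by lia.
have wka : (w k < a)%N by lia.
have [li [hli nli]] := IH (w i) i ltac:(lia) erefl wi0.
have [lk [hlk nlk]] := IH (w k) k ltac:(lia) erefl wk0.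
exists (amul A li lk); split.
  by rewrite -wc wce; apply: inL_mul.
rewrite -Eik -amul_ev.
have -> : amul A (ev i) (ev k) - amul A li lk =
   amul A (ev i - li) (ev k) + amul A li (ev k - lk).
  by rewrite amulBl amulBr addrA subrK.
have nli' : inN (w i) li.
  have -> : li = ev i - (ev i - li) by rewrite opprB addrCA subrr addr0.
  apply: inNB; first exact: inN_ev.
  exact: inN_mono nli.
apply: inND.
  apply: (@inN_mono ((w i).+1 + w k)); first by lia.
  apply: cmulN => //; exact: inN_ev.
apply: (@inN_mono (w i + (w k).+1)); first by lia.
exact: cmulN.
Qed.

Lemma ev_step c : (forall c', (w c < w c')%N -> inL A S J (ev c')) -> inL A S J (ev c).
Proof.
move=> h; case: (eqVneq c ord0) => [->|c0].
  by apply: (@inL_word _ _ _ _ _ 0%N) => //; rewrite -aoneE; constructor.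
have [l [hl nl]] := Gstep (leqnn (w c)) erefl (Hwpos c0).
have -> : ev c = l + (ev c - l) by rewrite addrC subrK.
apply: inLD; first exact: inL_mono (HwJ c) hl.
rewrite (vsum (ev c - l)); apply: inL_sum => c'.
case: (ltnP (w c') (w c).+1) => h'.
  by rewrite nl // scale0r; exact: inL0.
by apply: inLZ; apply: h.
Qed.

Lemma inL_ev_hi d : forall c, (J <= w c + d)%N -> inL A S J (ev c).
Proof.
elim: d => [|d IH] c hc; apply: ev_step => c' hc'.
  by have := HwJ c'; lia.
by apply: IH; lia.
Qed.

Lemma Lfull : L_full A S J.
Proof.
move=> v; rewrite (vsum v); apply: inL_sum => c; apply: inLZ.
by apply: (@inL_ev_hi J); lia.
Qed.
End Upper.

Definition gens := [seq ev i | i <- enum 'I_n.+1 & w i == 1%N].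

Lemma gens_word_N N : forall c, (w c <= N)%N -> word A gens (w c) (ev c).
Proof.
elim: N => [|N IH] c hc.
  have wc0 : w c = 0%N by lia.
  have -> : c = ord0.
    by apply/eqP; apply/negP => /negP c0; have := Hwpos c0; lia.
  by rewrite Hw0 -aoneE; constructor.
case: (ltnP 1 (w c)) => [w1|w1].
  have [i [k [wi0 wk0 wce Eik]]] := HEgen w1.
  rewrite wce -Eik -amul_ev; apply: word_mul => //; apply: IH; lia.
case: (eqVneq c ord0) => [->|c0]; first by rewrite Hw0 -aoneE; constructor.
have wc1 : w c = 1%N by have := Hwpos c0; lia.
rewrite wc1; constructor; apply/mapP; exists c => //.
by rewrite mem_filter mem_enum wc1 eqxx.
Qed.

Lemma gens_gen : generates A gens.
Proof.
move=> v; exists J; rewrite (vsum v); apply: inL_sum => c; apply: inLZ.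
exact: inL_word (HwJ c) (gens_word_N (leqnn _)).
Qed.

Lemma gens_inv a v : word A gens a v -> v = 0 \/ exists c, v = ev c /\ w c = a.
Proof.
elim=> [|s sS|a' b' x y a0 b0 _ hx _ hy].
- by right; exists ord0; rewrite Hw0.
- move: sS => /mapP [c]; rewrite mem_filter => /andP [/eqP wc _] ->.
  by right; exists c.
case: hx => [->|[i [-> wi]]]; first by left; rewrite amul0l.
case: hy => [->|[k [-> wk]]]; first by left; rewrite amul0r.
rewrite amul_ev.
have i0 : i != ord0 by apply/eqP => i0; move: wi; rewrite i0 Hw0; lia.
have k0 : k != ord0 by apply/eqP => k0; move: wk; rewrite k0 Hw0; lia.
case: (HEw i0 k0) => [->|[c -> wc]]; first by left.
by right; exists c; rewrite wc wi wk.
Qed.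

Lemma not_full i : (i < J)%N -> ~ L_full A gens i.
Proof.
move=> iJ hf; have [c wc] := Htop; have [m [cf [wf [hw e]]]] := hf (ev c).
have : ev c 0 c = 0.
  rewrite e summxE big1 // => k _; have [a [ai wk]] := hw k.
  rewrite mxE; case: (gens_inv wk) => [->|[c' [-> wc']]]; first by rewrite mxE mulr0.
  rewrite evE; case: eqP => [cc|]; last by rewrite mulr0.
  by subst c'; lia.
by rewrite evE eqxx => /eqP; rewrite oner_eq0.
Qed.

Theorem alg_len : alg_length A J.
Proof.
split.
  by exists gens; split; [exact: gens_gen|split; [exact: (Lfull gens_gen)|exact: not_full]].
move=> S k gS [_ hk]; rewrite leqNgt; apply/negP => Jk.
exact: hk J Jk (Lfull gS).
Qed.

End Conc.

Section FromChain.
Variables (F : fieldType) (n : nat) (L : seq nat) (J : nat).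
Hypotheses (Lu : uniq L) (L0 : 0%N \notin L) (LJ : J \in L)
  (Lmax : forall t, t \in L -> (t <= J)%N)
  (Lcl : forall t, t \in L -> (1 < t)%N -> exists a b, [/\ a \in L, b \in L & t = (a + b)%N])
  (Lsz : (size L <= n)%N).

Definition cw (i : 'I_n.+1) : nat :=
  if i == ord0 then 0%N else if (i <= size L)%N then nth 0%N L i.-1 else 1%N.

Definition cE (i k : 'I_n.+1) : 'rV[F]_n.+1 :=
  if i == ord0 then ev F k else if k == ord0 then ev F i else
  if [&& (i <= size L)%N, (k <= size L)%N & (cw i + cw k)%N \in L]
  then ev F (inord (index (cw i + cw k)%N L).+1) else 0.

Lemma cE0l k : cE ord0 k = ev F k.
Proof. by rewrite /cE eqxx. Qed.
Lemma cE0r i : cE i ord0 = ev F i.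
Proof. by rewrite /cE; case: eqP => [->|]; rewrite ?eqxx. Qed.

Lemma cw_live (i : 'I_n.+1) : i != ord0 -> (i <= size L)%N -> cw i \in L.
Proof.
move=> i0 il; rewrite /cw (negbTE i0) il; apply: mem_nth.
apply: leq_trans il; rewrite prednK // lt0n.
by apply: contra i0 => /eqP h; apply/eqP; apply: val_inj.
Qed.

Lemma cw_pos i : i != ord0 -> (0 < cw i)%N.
Proof.
move=> i0; case: (leqP i (size L)) => il.
  by have := cw_live i0 il; rewrite lt0n; case: eqP => // ->; rewrite (negbTE L0).
by rewrite /cw (negbTE i0) ifN // -ltnNge.
Qed.

Lemma cw_ind (t : nat) : t \in L -> exists c : 'I_n.+1, c != ord0 /\ cw c = t /\ (c <= size L)%N /\ val c = (index t L).+1.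
Proof.
move=> tL; have il : (index t L < size L)%N by rewrite index_mem.
have cn : ((index t L).+1 < n.+1)%N by lia.
exists (Ordinal cn); split; first by [].
split; last by split => //=; lia.
rewrite /cw /=; by rewrite il nth_index.
Qed.

Lemma one_le_J : (0 < J)%N.
Proof. by move: LJ; rewrite lt0n; case: eqP => // ->; rewrite (negbTE L0). Qed.

Theorem chain_alg : exists A : nalg F n.+1, alg_length A J.
Proof.
exists (A cE0l cE0r); apply: (@alg_len F n cw cE J cE0l cE0r).
- by rewrite /cw eqxx.
- exact: cw_pos.
- move=> i; rewrite /cw; case: eqP => // _; case: ifP => _; last exact: one_le_J.
  case: (ltnP i.-1 (size L)) => h; first by apply: Lmax; exact: mem_nth.
  by rewrite nth_default.
- move=> i k i0 k0; rewrite /cE (negbTE i0) (negbTE k0).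
  case: ifP => [/and3P [il kl sL]|]; last by left.
  right; have [c [c0 [wc [cl vc]]]] := cw_ind sL.
  exists c => //; congr (ev F _); apply: val_inj; rewrite /= vc inordK // -vc; exact: ltn_ord.
- move=> c w1.
  have c0 : c != ord0 by apply/eqP => c0; move: w1; rewrite c0 /cw eqxx.
  have cl : (c <= size L)%N by move: w1; rewrite /cw (negbTE c0); case: ifP.
  have [a [b [aL bL ab]]] := Lcl (cw_live c0 cl) w1.
  have [i [i0 [wi [il vi]]]] := cw_ind aL.
  have [k [k0 [wk [kl vk]]]] := cw_ind bL.
  exists i, k; split.
  + exact: cw_pos.
  + exact: cw_pos.
  + by rewrite wi wk.
  rewrite /cE (negbTE i0) (negbTE k0) il kl wi wk -ab (cw_live c0 cl) /=.
  congr (ev F _); apply: val_inj; rewrite /= inordK.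
    rewrite /cw (negbTE c0) cl index_uniq //.
      have : (0 < c)%N by rewrite lt0n; apply: contra c0 => /eqP h; apply/eqP; apply: val_inj.
      lia.
    have : (0 < c)%N by rewrite lt0n; apply: contra c0 => /eqP h; apply/eqP; apply: val_inj.
    by move=> h; rewrite prednK.
  rewrite ltnS; apply: leq_trans Lsz; rewrite index_mem; exact: cw_live c0 cl.
- by have [c [_ [wc _]]] := cw_ind LJ; exists c.
- exact: one_le_J.
Qed.
End FromChain.
Local Open Scope nat_scope.

Definition gtr := fun a b : nat => (b < a)%N.
Definition closed_ch (L : seq nat) := forall t, t \in L -> (1 < t)%N ->
  exists a b, [/\ a \in L, b \in L & t = (a + b)%N].
Definition ch (L : seq nat) := [/\ sorted gtr L, 0%N \notin L, 1%N \in L & closed_ch L].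

Lemma gtr_trans : transitive gtr.
Proof. by move=> a b c h1 h2; rewrite /gtr; exact: ltn_trans h2 h1. Qed.
Lemma gtr_irr : irreflexive gtr.
Proof. by move=> a; rewrite /gtr ltnn. Qed.

Lemma ch1 : ch [:: 1%N].
Proof.
split=> //= t; rewrite inE => /eqP -> //.
Qed.

Lemma ch_ext J T a b : ch (J :: T) -> a \in J :: T -> b \in J :: T -> (J < a + b)%N ->
  ch ((a + b)%N :: J :: T).
Proof.
move=> [s0 n0 i1 cl] aL bL Jab; split.
- by rewrite /= {1}/gtr Jab.
- rewrite in_cons negb_or n0 andbT; apply/eqP => h; move: Jab; rewrite -h ltn0 //.
- by rewrite in_cons i1 orbT.
move=> t; rewrite in_cons => /orP [/eqP ->|tL] t1.
  by exists a, b; split => //; rewrite in_cons ?aL ?bL orbT.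
have [x [y [xL yL ->]]] := cl t tL t1.
by exists x, y; split => //; rewrite in_cons ?xL ?yL orbT.
Qed.

Lemma chain_dim (F : fieldType) m J T : ch (J :: T) -> (size (J :: T) <= m)%N ->
  exists A : nalg F m.+1, alg_length A J.
Proof.
move=> [s0 n0 i1 cl] sz; apply: (@chain_alg F m (J :: T) J) => //.
- exact: (sorted_uniq gtr_trans gtr_irr).
- by rewrite in_cons eqxx.
- move=> t; rewrite in_cons => /orP [/eqP ->//|tT].
  have := order_path_min gtr_trans s0 => /allP /(_ t tT); rewrite /gtr; exact: ltnW.
Qed.

Lemma ch_one J T : ch (J :: T) -> 1%N \in J :: T.
Proof. by case. Qed.
Lemma ch_pos J T : ch (J :: T) -> (0 < J)%N.
Proof. by case=> _ h _ _; move: h; rewrite in_cons negb_or lt0n eq_sym => /andP []. Qed.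

Lemma ext_even J T : ch (J :: T) -> ch ((J + J)%N :: J :: T).
Proof. move=> c; apply: ch_ext (mem_head _ _) (mem_head _ _) _ => //; have := ch_pos c; lia. Qed.

Lemma ext_odd J T : ch (J :: T) -> ch ((J + J + 1)%N :: (J + J)%N :: J :: T).
Proof.
move=> c; have c2 := ext_even c; apply: ch_ext c2 (mem_head _ _) _ _.
  by rewrite in_cons (ch_one c) orbT.
lia.
Qed.

Lemma half_split J : J = (J %/ 2 + J %/ 2)%N \/ J = (J %/ 2 + J %/ 2 + 1)%N.
Proof. lia. Qed.

Lemma chQ k : forall J, (0 < J)%N -> (J < 2 ^ k)%N ->
  exists T, ch (J :: T) /\ ((size (J :: T)).+1 <= 2 * k)%N.
Proof.
elim: k => [|k IH] J J0 Jk; first by move: Jk; rewrite expn0; lia.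
case: (eqVneq J 1%N) => [->|J1]; first by exists [::]; split; [exact: ch1|rewrite /=; lia].
have x0 : (0 < J %/ 2)%N by lia.
have xk : (J %/ 2 < 2 ^ k)%N by move: Jk; rewrite expnS; lia.
have [T [cT sT]] := IH _ x0 xk.
case: (half_split J) => ->.
  by exists [:: J %/ 2 & T]; split; [exact: ext_even|move: sT => /=; lia].
by exists [:: (J %/ 2 + J %/ 2)%N, J %/ 2 & T]; split; [exact: ext_odd|move: sT => /=; lia].
Qed.

Lemma chR k : forall J, 0 < J -> J < 2 ^ k -> J != 2 ^ k - 1 ->
  exists T, ch (J :: T) /\ (size (J :: T)).+2 <= 2 * k.
Proof.
elim: k => [|k IH] J J0 Jk JJ; first by move: Jk; rewrite expn0; lia.
have ek := expn_gt0 2 k.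
case: (eqVneq J 1) => [J1|J1].
  case: (posnP k) => [k0|kp]; first by move: JJ; rewrite J1 k0.
  by exists [::]; rewrite J1; split; [exact: ch1|rewrite /=; lia].
have x0 : 0 < J %/ 2 by lia.
have xk : J %/ 2 < 2 ^ k by move: Jk; rewrite expnS; lia.
have hs := half_split J; move: x0 xk hs; set x := J %/ 2 => x0 xk [eJ|eJ].
  have [T [cT sT]] := chQ x0 xk.
  by exists [:: x & T]; rewrite eJ; split; [exact: ext_even|move: sT => /=; lia].
have xx : x != 2 ^ k - 1.
  by apply/eqP => h; move: JJ; rewrite expnS eJ h; lia.
have [T [cT sT]] := IH _ x0 xk xx.
by exists [:: (x + x), x & T]; rewrite eJ; split; [exact: ext_odd|move: sT => /=; lia].
Qed.

Lemma chP k : exists T, ch (2 ^ k :: T) /\ size (2 ^ k :: T) = k.+1.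
Proof.
elim: k => [|k [T [cT sT]]]; first by exists [::]; split; [exact: ch1|].
exists (2 ^ k :: T); rewrite expnS mul2n -addnn; split; first exact: ext_even.
by move: sT => /= ->.
Qed.

Definition SpP k := exists T, [/\ ch ((2 ^ k - 1) :: T), 3 \in (2 ^ k - 1) :: T &
  (size ((2 ^ k - 1) :: T)).+2 <= 2 * k].

Lemma sp_step k : SpP k -> SpP k.+2.
Proof.
move=> [T [cT T3 sz]].
have ek := expn_gt0 2 k.
set x := 2 ^ k - 1 in cT T3 sz.
have x0 := ch_pos cT.
have c1 := ext_even cT.
have c2 := ext_even c1.
have m3 : 3 \in [:: x + x + (x + x), x + x, x & T] by rewrite in_cons in_cons T3 !orbT.
have c3 := ch_ext c2 (mem_head _ _) m3 ltac:(lia).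
have e : x + x + (x + x) + 3 = 2 ^ k.+2 - 1 by rewrite /x !expnS; lia.
rewrite e in c3; exists [:: x + x + (x + x), x + x, x & T]; split => //.
  by do 3 rewrite in_cons; rewrite T3 !orbT.
by move: sz => /=; lia.
Qed.

Lemma sp_all m : SpP (m + 4) /\ SpP (m + 5).
Proof.
elim: m => [|m [h1 h2]].
  split.
    have c1 := ext_even ch1.
    have c2 := @ch_ext _ _ 2 1 c1 erefl erefl erefl.
    have c3 := ext_even c2.
    have c4 := ext_even c3.
    have c5 := @ch_ext _ _ 12 3 c4 erefl erefl erefl.
    by exists [:: 12; 6; 3; 2; 1]; split => //.
  have c1 := ext_even ch1.
  have c2 := @ch_ext _ _ 2 1 c1 erefl erefl erefl.
  have c3 := ext_even c2.
  have c4 := @ch_ext _ _ 6 1 c3 erefl erefl erefl.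
  have c5 := ext_even c4.
  have c6 := ext_even c5.
  have c7 := @ch_ext _ _ 28 3 c6 erefl erefl erefl.
  by exists [:: 28; 14; 7; 6; 3; 2; 1]; split => //.
have e1 : m.+1 + 4 = m + 5 by lia.
have e2 : m.+1 + 5 = (m + 4).+2 by lia.
by rewrite e1 e2; split => //; exact: sp_step.
Qed.

Lemma sp_k k : 4 <= k -> SpP k.
Proof.
move=> k4; have := sp_all (k - 4); have -> : k - 4 + 4 = k by lia.
by case.
Qed.

Theorem proposition4p11 (F : fieldType) (n : nat) :
  (6 <= n)%N -> B_atleast F n (2 ^ (uphalf n)).
Proof.
case: n => [//|m] n6 j /andP [j1 jk].
have := odd_double_half m.+2; rewrite -uphalfE -addnn.
set k := uphalf m.+1 in jk *.
have ek := expn_gt0 2 k.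
move=> hk.
case: (eqVneq j (2 ^ k)) => [->|jn].
  have [T [cT sT]] := chP k.
  apply: chain_dim cT _; rewrite sT; move: hk; case: (odd m.+2) => /=; lia.
case: (eqVneq j (2 ^ k - 1)) => [ej|jn1]; last first.
  have [T [cT sT]] := @chR k j j1 ltac:(lia) jn1.
  apply: chain_dim cT _; move: sT hk; case: (odd m.+2) => /=; lia.
move: hk; case: (odd m.+2) => /= hk.
  have [T [cT sT]] := @chQ k j j1 ltac:(lia).
  apply: chain_dim cT _; move: sT hk; lia.
have [T [cT _ sT]] := sp_k (ltac:(lia) : 4 <= k).
rewrite ej; apply: chain_dim cT _; move: sT hk; lia.
Qed.
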